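(* Let $q=|q|e^{i\varphi}$, where $|q|\in L^\infty(\mathbb{R})$ never vanishes and $\varphi:\mathbb{R}\to\mathbb{R}$ is locally absolutely continuous with $\partial_x\varphi\in L^\infty(\mathbb{R};\mathbb{R})$, and suppose that $u_\pm:=\frac12\partial_x\varphi\pm|q|\in L^\infty(\mathbb{R};\mathbb{R})$. Let $$L=\begin{pmatrix} i\partial_x & -iq\\ i\bar q & -i\partial_x\end{pmatrix}:H^1(\mathbb{R};\mathbb{C}^2)\to L^2(\mathbb{R};\mathbb{C}^2),\qquad \mathcal{L}=\begin{pmatrix} -u_- & i\partial_x\\ i\partial_x & -u_+\end{pmatrix}:H^1(\mathbb{R};\mathbb{C}^2)\to L^2(\mathbb{R};\mathbb{C}^2),$$ and let $M$ be the multiplication operator by the unitary matrix $$M=\frac1{\sqrt2}\begin{pmatrix} e^{-\frac12 i(\varphi-\frac\pi2)} & e^{\frac12 i(\varphi-\frac\pi2)}\\ e^{-\frac12 i(\varphi-\frac\pi2)} & -e^{\frac12 i(\varphi-\frac\pi2)}\end{pmatrix}.$$ Then $M$ maps $H^s(\mathbb{R};\mathbb{C}^2)$ bijectively onto itself for $s=0,1$, and $L$ and $\mathcal{L}$ are unitarily equivalent: $L=M^\ast\mathcal{L}M$.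
   Context: $L$ is the Lax operator of the one-dimensional cubic defocusing nonlinear Schrödinger equation $i\partial_t q+\partial_{xx}q=2|q|^2q$; $M^\ast$ denotes the conjugate transpose of $M$ (pointwise), which is its inverse. *)

(* Defs.v *)
From HB Require Import structures.
From mathcomp Require Import all_boot all_order all_algebra.
From mathcomp Require Import all_classical all_reals all_analysis.
From mathcomp Require Import complex.
Set Implicit Arguments. Unset Strict Implicit. Unset Printing Implicit Defensive.
Import Order.TTheory GRing.Theory Num.Theory.
Local Open Scope ring_scope.
Local Open Scope classical_set_scope.

Definition leb (R : realType) := @lebesgue_measure R.
Arguments leb R : clear implicits.

Definition rC (R : realType) (r : R) : R[i] := (r +i* 0)%C.
Definition iC (R : realType) : R[i] := (0 +i* 1)%C.
Arguments iC R : clear implicits.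
Definition expi (R : realType) (t : R) : R[i] := (cos t +i* sin t)%C.
Definition cmod (R : realType) (z : R[i]) : R :=
  Num.sqrt (complex.Re z ^+ 2 + complex.Im z ^+ 2).

Definition reF (R : realType) (f : R -> R[i]) : R -> R := fun x => complex.Re (f x).
Definition imF (R : realType) (f : R -> R[i]) : R -> R := fun x => complex.Im (f x).

Definition AC_on (R : realType) (f : R -> R) (a b : R) : Prop :=
  forall e : R, 0 < e -> exists2 d : R, 0 < d &
    forall (n : nat) (I : 'I_n -> R * R),
      (forall i, a <= (I i).1 /\ (I i).1 <= (I i).2 /\ (I i).2 <= b) ->
      (forall i j, i != j -> (I i).2 <= (I j).1 \/ (I j).2 <= (I i).1) ->
      \sum_(i < n) ((I i).2 - (I i).1) < d ->
      \sum_(i < n) `|f (I i).2 - f (I i).1| < e.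

Definition locAC (R : realType) (f : R -> R) : Prop :=
  forall a b : R, a < b -> AC_on f a b.

Definition locAC_C (R : realType) (f : R -> R[i]) : Prop :=
  locAC (reF f) /\ locAC (imF f).

Definition L2R (R : realType) (f : R -> R) : Prop :=
  measurable_fun setT f /\ (\int[leb R]_x ((f x) ^+ 2)%:E < +oo)%E.

Definition L2C (R : realType) (f : R -> R[i]) : Prop :=
  L2R (reF f) /\ L2R (imF f).

Definition LinfR (R : realType) (f : R -> R) : Prop :=
  measurable_fun setT f /\ exists C : R, \forall x \ae (leb R), `|f x| <= C.

Definition Linf_ae (R : realType) (f : R -> R) : Prop :=
  exists g : R -> R, LinfR g /\ \forall x \ae (leb R), f x = g x.

Definition cderivable (R : realType) (f : R -> R[i]) (x : R) : Prop :=
  derivable (reF f) x 1 /\ derivable (imF f) x 1.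
Definition cderiv (R : realType) (f : R -> R[i]) (x : R) : R[i] :=
  (derive1 (reF f) x +i* derive1 (imF f) x)%C.

(* H^1(R;C): locally AC representative in L^2 whose a.e. derivative is in L^2 *)
Definition H1C (R : realType) (f : R -> R[i]) : Prop :=
  locAC_C f /\ L2C f /\
  exists g : R -> R[i], L2C g /\
    \forall x \ae (leb R), cderivable f x /\ cderiv f x = g x.

Definition comp (R : realType) (F : R -> 'cV[R[i]]_2) (k : 'I_2) : R -> R[i] :=
  fun x => F x k ord0.
Definition vec2 (R : realType) (a b : R[i]) : 'cV[R[i]]_2 :=
  \col_(k < 2) (if val k == 0%N then a else b).

Definition L2V (R : realType) (F : R -> 'cV[R[i]]_2) : Prop :=
  L2C (comp F ord0) /\ L2C (comp F ord_max).
Definition H1V (R : realType) (F : R -> 'cV[R[i]]_2) : Prop :=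
  H1C (comp F ord0) /\ H1C (comp F ord_max).
Definition aeeqV (R : realType) (F G : R -> 'cV[R[i]]_2) : Prop :=
  \forall x \ae (leb R), F x = G x.

Definition u_plus (R : realType) (q : R -> R[i]) (phi : R -> R) (x : R) : R :=
  derive1 phi x / 2 + cmod (q x).
Definition u_minus (R : realType) (q : R -> R[i]) (phi : R -> R) (x : R) : R :=
  derive1 phi x / 2 - cmod (q x).

Definition Lop (R : realType) (q : R -> R[i]) (F : R -> 'cV[R[i]]_2) : R -> 'cV[R[i]]_2 :=
  fun x => vec2
    (iC R * cderiv (comp F ord0) x - iC R * q x * comp F ord_max x)
    (iC R * conjc (q x) * comp F ord0 x - iC R * cderiv (comp F ord_max) x).

Definition calLop (R : realType) (q : R -> R[i]) (phi : R -> R)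
    (F : R -> 'cV[R[i]]_2) : R -> 'cV[R[i]]_2 :=
  fun x => vec2
    (- rC (u_minus q phi x) * comp F ord0 x + iC R * cderiv (comp F ord_max) x)
    (iC R * cderiv (comp F ord0) x - rC (u_plus q phi x) * comp F ord_max x).

Definition Mmat (R : realType) (phi : R -> R) (x : R) : 'M[R[i]]_2 :=
  let th := phi x - pi / 2 in
  rC (Num.sqrt 2)^-1 *:
  \matrix_(i < 2, j < 2)
     (if val j == 0%N then expi (- (th / 2))
      else if val i == 0%N then expi (th / 2) else - expi (th / 2)).

Definition adjmx (R : realType) (A : 'M[R[i]]_2) : 'M[R[i]]_2 := map_mx conjc A^T.

Definition Mapp (R : realType) (phi : R -> R) (F : R -> 'cV[R[i]]_2) : R -> 'cV[R[i]]_2 :=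
  fun x => Mmat phi x *m F x.
Definition Mstar_app (R : realType) (phi : R -> R) (F : R -> 'cV[R[i]]_2) : R -> 'cV[R[i]]_2 :=
  fun x => adjmx (Mmat phi x) *m F x.

(* Main.v *)
Require Import Defs.
From HB Require Import structures.
From mathcomp Require Import all_boot all_order all_algebra.
From mathcomp Require Import all_classical all_reals all_analysis.
From mathcomp Require Import complex.
From mathcomp Require Import ring lra.
From mathcomp Require Import measurable_realfun.
Import Order.TTheory GRing.Theory Num.Theory.
Local Open Scope ring_scope.
Local Open Scope classical_set_scope.
Set Implicit Arguments. Unset Strict Implicit. Unset Printing Implicit Defensive.
Import numFieldNormedType.Exports.
Section S.
Variable R : realType.
Local Notation mu := (leb R).
Lemma ae_filter : Filter (nbhs (almost_everywhere mu)).
Proof. exact: ae_filter_ringOfSetsType. Qed.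
Lemma aeS (P Q : R -> Prop) : (forall x, P x -> Q x) ->
  (\forall x \ae mu, P x) -> \forall x \ae mu, Q x.
Proof. move=> PQ h. exact: (@filterS _ _ ae_filter P). Qed.
Lemma aeI (P Q : R -> Prop) : (\forall x \ae mu, P x) -> (\forall x \ae mu, Q x) ->
  \forall x \ae mu, P x /\ Q x.
Proof. move=> hP hQ. exact: (@filterI _ _ ae_filter _ _ hP hQ). Qed.
Lemma aeT (P : R -> Prop) : (forall x, P x) -> \forall x \ae mu, P x.
Proof. by move=> h; apply: aeW. Qed.
Lemma L2R_bound (f g : R -> R) (C : R) : 0 <= C -> L2R f -> measurable_fun setT g ->
  (\forall x \ae mu, g x ^+ 2 <= C * f x ^+ 2) -> L2R g.
Proof.
move=> C0 [mf fi] mg hb; split => //.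
apply: (le_lt_trans (y := (\int[mu]_x (C%:E * (f x ^+ 2)%:E))%E)).
  apply: ae_ge0_le_integral => //.
  - by move=> x _; rewrite lee_fin sqr_ge0.
  - by apply/measurable_EFinP; apply: measurable_funX.
  - by move=> x _; rewrite -EFinM lee_fin mulr_ge0 // sqr_ge0.
  - apply/measurable_EFinP => /=. 
    apply: measurable_funM => //. exact: measurable_funX.
  - by apply: aeS hb => x hx _; rewrite -EFinM lee_fin.
rewrite ge0_integralZl_EFin //.
- by apply: lte_mul_pinfty => //; rewrite lee_fin.
- by move=> x _; rewrite lee_fin sqr_ge0.
- by apply/measurable_EFinP; apply: measurable_funX.
Qed.
Lemma L2R_add (f g : R -> R) : L2R f -> L2R g -> L2R (fun x => f x + g x).
Proof.
move=> [mf fi] [mg gi]; split; first exact: measurable_funD.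
have mf2 : measurable_fun setT (fun x => (f x ^+ 2)%:E).
  by apply/measurable_EFinP; apply: measurable_funX.
have mg2 : measurable_fun setT (fun x => (g x ^+ 2)%:E).
  by apply/measurable_EFinP; apply: measurable_funX.
apply: (le_lt_trans (y := (\int[mu]_x (2%:E * (f x ^+ 2)%:E + 2%:E * (g x ^+ 2)%:E))%E)).
  apply: ge0_le_integral => //.
  - by move=> x _; rewrite lee_fin sqr_ge0.
  - by apply/measurable_EFinP; apply: measurable_funX; exact: measurable_funD.
  - apply: emeasurable_funD; apply: emeasurable_funM => //; exact: measurable_cst.
  - move=> x _; rewrite -!EFinM -EFinD lee_fin.
    have := sqr_ge0 (f x - g x); nra.
rewrite ge0_integralD //; last 4 first.
- by move=> x _; rewrite -EFinM lee_fin mulr_ge0 // sqr_ge0.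
- apply: emeasurable_funM => //; exact: measurable_cst.
- by move=> x _; rewrite -EFinM lee_fin mulr_ge0 // sqr_ge0.
- apply: emeasurable_funM => //; exact: measurable_cst.
rewrite !ge0_integralZl_EFin //; try by move=> x _; rewrite lee_fin sqr_ge0.
by apply: lte_add_pinfty; apply: lte_mul_pinfty.
Qed.
Lemma L2R_mul (h f : R -> R) (C : R) : L2R f -> measurable_fun setT h ->
  (\forall x \ae mu, `|h x| <= C) -> L2R (fun x => h x * f x).
Proof.
move=> Lf mh hb; apply: (L2R_bound (C := C ^+ 2) (f := f)) => //.
- exact: sqr_ge0.
- apply: measurable_funM => //; by case: Lf.
apply: aeS hb => x hx; rewrite exprMn ler_wpM2r ?sqr_ge0 //.
rewrite -real_normK ?num_real //.
have := normr_ge0 (h x); nra.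
Qed.
End S.
Section AC.
Variable R : realType.
Lemma AC_comb (f g h : R -> R) (a b K1 K2 : R) : 0 <= K1 -> 0 <= K2 ->
  AC_on f a b -> AC_on g a b ->
  (forall u v, a <= u -> u <= v -> v <= b ->
     `|h v - h u| <= K1 * `|f v - f u| + K2 * `|g v - g u|) ->
  AC_on h a b.
Proof.
move=> K10 K20 hf hg hh e e0.
have e1 : 0 < e / (2 * (K1 + 1)) by apply: divr_gt0 => //; lra.
have e2 : 0 < e / (2 * (K2 + 1)) by apply: divr_gt0 => //; lra.
have [d1 d10 H1] := hf _ e1; have [d2 d20 H2] := hg _ e2.
exists (Num.min d1 d2); first by rewrite lt_min d10 d20.
move=> n I HI Hdis Hs.
have m1 : Num.min d1 d2 <= d1 by rewrite ge_min lexx.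
have m2 : Num.min d1 d2 <= d2 by rewrite ge_min lexx orbT.
have S1 := H1 n I HI Hdis (lt_le_trans Hs m1).
have S2 := H2 n I HI Hdis (lt_le_trans Hs m2).
apply: (le_lt_trans (y := K1 * \sum_(i < n) `|f (I i).2 - f (I i).1| +
                          K2 * \sum_(i < n) `|g (I i).2 - g (I i).1|)).
  rewrite !mulr_sumr -big_split /=; apply: ler_sum => i _.
  by have [? [? ?]] := HI i; apply: hh.
set s1 := \sum_(i < n) _ in S1 *; set s2 := \sum_(i < n) _ in S2 *.
have hK1 : K1 * s1 <= K1 * (e / (2 * (K1 + 1))) by apply: ler_wpM2l => //; exact: ltW.
have hK2 : K2 * s2 <= K2 * (e / (2 * (K2 + 1))) by apply: ler_wpM2l => //; exact: ltW.
have q1 : K1 * (e / (2 * (K1 + 1))) < e / 2.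
  have ht : e / (2 * (K1 + 1)) * (2 * (K1 + 1)) = e by field; lra.
  move: ht e1; set t := e / _ => ht et.
  have -> : e / 2 = t * K1 + t by rewrite -ht; field.
  lra.
have q2 : K2 * (e / (2 * (K2 + 1))) < e / 2.
  have ht : e / (2 * (K2 + 1)) * (2 * (K2 + 1)) = e by field; lra.
  move: ht e2; set t := e / _ => ht et.
  have -> : e / 2 = t * K2 + t by rewrite -ht; field.
  lra.
lra.
Qed.
Lemma near_dist (x d : R) : 0 < d -> \forall t \near x, `|x - t| < d.
Proof. move=> d0. exact: (@cvgr_dist_lt _ _ _ (nbhs x) _ id). Qed.

Lemma locAC_cont (f : R -> R) : locAC f -> continuous f.
Proof.
move=> hf x; apply/cvgrPdist_lt => e e0.
have [d d0 hd] := hf (x - 1) (x + 1) ltac:(lra) e e0.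
have md : 0 < Num.min d 1 by rewrite lt_min d0 ltr01.
have m1 : Num.min d 1 <= d by rewrite ge_min lexx.
have m2 : Num.min d 1 <= 1 by rewrite ge_min lexx orbT.
near=> t.
have ht : `|x - t| < Num.min d 1 by near: t; apply: near_dist.
have := hd 1 (fun _ => (Num.min x t, Num.max x t)).
rewrite !big_ord1 /=; case: (lerP x t) => xt.
- rewrite distrC; apply => //.
  + move=> i /=; move: ht; rewrite distrC ger0_norm; lra.
  + by move=> i j; rewrite !ord1.
  + move: ht; rewrite distrC ger0_norm; lra.
- apply => //.
  + move=> i /=; move: ht; rewrite ger0_norm; lra.
  + by move=> i j; rewrite !ord1.
  + move: ht; rewrite ger0_norm; lra.
Unshelve. all: by end_near.
Qed.
Lemma cont_bounded (f : R -> R) a b : continuous f ->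
  exists B, forall x, a <= x <= b -> `|f x| <= B.
Proof.
move=> hf; case: (lerP a b) => ab; last first.
  by exists 0 => x /andP[ax xb]; have := le_trans ax xb; rewrite leNgt ab.
have cn : continuous (fun x => `|f x|).
  move=> x; apply: continuous_comp; first exact: hf.
  exact: norm_continuous.
have [c _ hc] := EVT_max ab (continuous_subspaceT cn).
by exists `|f c| => x xab; apply: hc; rewrite in_itv.
Qed.
Lemma locAC_add (f g : R -> R) : locAC f -> locAC g -> locAC (fun x => f x + g x).
Proof.
move=> hf hg a b ab; apply: (AC_comb (K1 := 1) (K2 := 1) _ _ (hf a b ab) (hg a b ab)) => //.
move=> u v _ _ _; rewrite !mul1r.
have -> : f v + g v - (f u + g u) = (f v - f u) + (g v - g u) by ring.
exact: ler_normD.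
Qed.

Lemma locAC_lip (g f : R -> R) (K : R) : 0 <= K ->
  (forall x y, `|g y - g x| <= K * `|y - x|) -> locAC f -> locAC (fun x => g (f x)).
Proof.
move=> K0 hg hf a b ab; apply: (AC_comb (K1 := K) (K2 := 0) _ _ (hf a b ab) (hf a b ab)) => //.
by move=> u v _ _ _; rewrite mul0r addr0.
Qed.

Lemma locAC_const (c : R) : locAC (fun _ => c).
Proof.
move=> a b ab e e0; exists 1 => // n I _ _ _.
by rewrite big1 // => i _; rewrite subrr normr0.
Qed.

Lemma locAC_mul (f g : R -> R) : locAC f -> locAC g -> locAC (fun x => f x * g x).
Proof.
move=> hf hg a b ab.
have [Bf hBf] := cont_bounded a b (locAC_cont hf).
have [Bg hBg] := cont_bounded a b (locAC_cont hg).
have Bf0 : 0 <= Bf by apply: le_trans (hBf a _); rewrite ?normr_ge0 // lexx ltW.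
have Bg0 : 0 <= Bg by apply: le_trans (hBg a _); rewrite ?normr_ge0 // lexx ltW.
apply: (AC_comb (K1 := Bg) (K2 := Bf) _ _ (hf a b ab) (hg a b ab)) => //.
move=> u v au uv vb.
have -> : f v * g v - f u * g u = f v * (g v - g u) + g u * (f v - f u) by ring.
apply: (le_trans (ler_normD _ _)); rewrite !normrM addrC.
apply: lerD; apply: ler_wpM2r => //.
- apply: hBg; rewrite au /=; exact: le_trans uv vb.
- apply: hBf; rewrite vb andbT; exact: le_trans au uv.
Qed.
Lemma cos_lip0 (u v : R) : u < v -> `|cos v - cos u| <= `|v - u|.
Proof.
move=> uv.
have [c _ ->] := @MVT R cos (fun x => - sin x) u v uv (fun x _ => is_derive_cos x)
  (continuous_subspaceT (@continuous_cos R)).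
rewrite normrM normrN -[leRHS]mul1r ler_wpM2r //; exact: sin_max.
Qed.

Lemma cos_lip (u v : R) : `|cos v - cos u| <= `|v - u|.
Proof.
case: (ltgtP u v) => uv; first exact: cos_lip0.
- by rewrite distrC [`|v - u|]distrC; exact: cos_lip0.
- by rewrite uv !subrr normr0.
Qed.

Lemma cos_aff_lip (a b : R) x y : `|cos (a * y + b) - cos (a * x + b)| <= `|a| * `|y - x|.
Proof.
apply: le_trans (cos_lip _ _) _.
rewrite -normrM; have -> : a * y + b - (a * x + b) = a * (y - x) by ring. by [].
Qed.
End AC.

Section Der.
Variable R : realType.
Lemma der_is (f : R -> R) (x : R) : derivable f x 1 -> is_derive x 1 f (derive1 f x).
Proof. by move=> h; apply: DeriveDef h _; rewrite derive1E. Qed.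
Lemma is_der1 (f : R -> R) (x df : R) : is_derive x 1 f df -> derivable f x 1 /\ derive1 f x = df.
Proof. by move=> h; split; [exact: ex_derive|rewrite derive1E derive_val]. Qed.
Lemma isd_add (f g : R -> R) (df dg x : R) : is_derive x 1 f df -> is_derive x 1 g dg -> 
  is_derive x 1 (fun y => f y + g y) (df + dg).
Proof. move=> h1 h2. apply: is_deriveD. Qed.
Lemma isd_mul (f g : R -> R) (df dg x : R) : is_derive x 1 f df -> is_derive x 1 g dg -> 
  is_derive x 1 (fun y => f y * g y) (f x * dg + g x * df).
Proof. move=> h1 h2. apply: is_deriveM. Qed.
Lemma isd_scale (f : R -> R) (r df x : R) : is_derive x 1 f df ->
  is_derive x 1 (fun y => r * f y) (r * df).
Proof. move=> h. apply: is_deriveZ. Qed.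
Lemma isd_cst (c x : R) : is_derive x 1 (fun _ : R => c) 0.
Proof. exact: is_derive_cst. Qed.
Lemma isd_cos (f : R -> R) (df x : R) : is_derive x 1 f df -> 
  is_derive x 1 (fun y => cos (f y)) (- sin (f x) * df).
Proof. move=> h1. apply: (is_derive1_comp (f := cos)). Qed.
End Der.

Definition H1R (R : realType) (f : R -> R) : Prop := locAC f /\ L2R f /\
  exists g, L2R g /\ \forall x \ae leb R, derivable f x 1 /\ derive1 f x = g x.
Definition goodphi (R : realType) (f : R -> R) : Prop := locAC f /\
  exists h, LinfR h /\ \forall x \ae leb R, derivable f x 1 /\ derive1 f x = h x.
Definition goodm (R : realType) (f : R -> R) : Prop :=
  goodphi f /\ exists C, forall x, `|f x| <= C.

Section H1.
Variable R : realType.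
Local Notation mu := (leb R).

Lemma isd_eq (f : R -> R) (x df df' : R) : is_derive x 1 f df -> df = df' -> is_derive x 1 f df'.
Proof. by move=> h <-. Qed.

Lemma locAC_meas (f : R -> R) : locAC f -> measurable_fun setT f.
Proof. by move=> h; apply: continuous_measurable_fun; exact: locAC_cont. Qed.

Lemma H1R_add (f g : R -> R) : H1R f -> H1R g -> H1R (fun x => f x + g x).
Proof.
move=> [a1 [l1 [g1 [lg1 e1]]]] [a2 [l2 [g2 [lg2 e2]]]].
split; first exact: locAC_add.
split; first exact: L2R_add.
exists (fun x => g1 x + g2 x); split; first exact: L2R_add.
apply: aeS (aeI e1 e2) => x [[d1 q1] [d2 q2]]; apply: is_der1.
by rewrite -q1 -q2; apply: isd_add; exact: der_is.
Qed.

Lemma H1R_mul (a f : R -> R) : goodm a -> H1R f -> H1R (fun x => a x * f x).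
Proof.
move=> [[aa [ha [[mha [Ch hCh]] ea]]] [Ca hCa]] [af [lf [g [lg ef]]]].
have ma := locAC_meas aa.
split; first exact: locAC_mul.
split; first by apply: (L2R_mul (C := Ca)) => //; apply: aeT.
exists (fun x => ha x * f x + a x * g x); split.
  apply: L2R_add; first exact: (L2R_mul (C := Ch)).
  by apply: (L2R_mul (C := Ca)) => //; apply: aeT.
apply: aeS (aeI ea ef) => x [[d1 q1] [d2 q2]]; apply: is_der1.
apply: isd_eq; first exact: (isd_mul (der_is d1) (der_is d2)).
by rewrite q1 q2; ring.
Qed.

Lemma goodm_const (c : R) : goodm (fun _ => c).
Proof.
split; last by exists `|c|.
split; first exact: locAC_const.
exists (fun _ => 0); split.
  split; first exact: measurable_cst.
  by exists 0; apply: aeT => x; rewrite normr0.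
apply: aeT => x; apply: is_der1; exact: isd_cst.
Qed.

Lemma goodm_cos (phi : R -> R) (r a b : R) : goodphi phi ->
  goodm (fun x => r * cos (a * phi x + b)).
Proof.
move=> [ap [h [[mh [C hC]] eh]]].
split; last first.
  exists `|r| => x; rewrite normrM -[leRHS]mulr1 ler_wpM2l //; exact: cos_max.
split.
  apply: locAC_mul; first exact: locAC_const.
  apply: (locAC_lip (g := fun y => cos (a * y + b)) (K := `|a|)) => //.
  exact: cos_aff_lip.
exists (fun x => r * (- sin (a * phi x + b) * (a * h x))); split.
  split.
    apply: measurable_funM; first exact: measurable_cst.
    apply: measurable_funM; last by apply: measurable_funM => //; exact: measurable_cst.
    apply: measurable_funN.
    apply: continuous_measurable_fun => x.
    apply: continuous_comp; last exact: continuous_sin.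
    apply: continuousD; last exact: cst_continuous.
    apply: continuousM; first exact: cst_continuous.
    exact: locAC_cont.
  exists (`|r| * `|a| * C); apply: aeS hC => x hx.
  rewrite !normrM normrN -!mulrA ler_wpM2l //.
  rewrite mulrCA ler_wpM2l //.
  rewrite -[leRHS]mul1r; apply: ler_pM => //; exact: sin_max.
apply: aeS eh => x [d q]; apply: is_der1.
apply: isd_eq.
  apply: isd_scale; apply: isd_cos.
  apply: (isd_add (f := fun y => a * phi y) (g := fun _ => b)).
  apply: isd_scale; exact: der_is.
by rewrite /= q addr0.
Qed.
End H1.

Definition goodC (R : realType) (m : R -> R[i]) : Prop := goodm (reF m) /\ goodm (imF m).

Section CX.
Variable R : realType.
Local Notation mu := (leb R).

Lemma ReM (x y : R[i]) : complex.Re (x * y) = complex.Re x * complex.Re y - complex.Im x * complex.Im y.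
Proof. by case: x => a b; case: y => c d. Qed.
Lemma ImM (x y : R[i]) : complex.Im (x * y) = complex.Re x * complex.Im y + complex.Im x * complex.Re y.
Proof. by case: x => a b; case: y => c d. Qed.
Lemma ReD (x y : R[i]) : complex.Re (x + y) = complex.Re x + complex.Re y.
Proof. by case: x => a b; case: y => c d. Qed.
Lemma ImD (x y : R[i]) : complex.Im (x + y) = complex.Im x + complex.Im y.
Proof. by case: x => a b; case: y => c d. Qed.

Lemma H1C_iff (f : R -> R[i]) : H1C f <-> H1R (reF f) /\ H1R (imF f).
Proof.
split.
  move=> [[a1 a2] [[l1 l2] [g [[lg1 lg2] e]]]]; split.
  - split => //; split => //; exists (reF g); split => //.
    by apply: aeS e => x [[d1 d2] q]; split => //; rewrite /reF -q.
  - split => //; split => //; exists (imF g); split => //.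
    by apply: aeS e => x [[d1 d2] q]; split => //; rewrite /imF -q.
move=> [[a1 [l1 [g1 [lg1 e1]]]] [a2 [l2 [g2 [lg2 e2]]]]].
split; first by split.
split; first by split.
exists (fun x => (g1 x +i* g2 x)%C); split; first by split.
apply: aeS (aeI e1 e2) => x [[d1 q1] [d2 q2]]; split; first by split.
by rewrite /cderiv q1 q2.
Qed.

Lemma H1R_neg (f : R -> R) : H1R f -> H1R (fun x => - f x).
Proof.
move=> h; have := H1R_mul (goodm_const (-1)) h.
by have -> : (fun x => -1 * f x) = (fun x => - f x) by apply/funext => x; rewrite mulN1r.
Qed.

Lemma L2R_neg (f : R -> R) : L2R f -> L2R (fun x => - f x).
Proof.
move=> h; have := @L2R_mul R (fun _ => -1) f 1 h (measurable_cst (-1 : R)).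
have -> : (fun x => -1 * f x) = (fun x => - f x) by apply/funext => x; rewrite mulN1r.
by apply; apply: aeT => x; rewrite normrN normr1.
Qed.

Lemma goodm_L2R (a f : R -> R) : goodm a -> L2R f -> L2R (fun x => a x * f x).
Proof.
move=> [[aa _] [C hC]] lf; apply: (L2R_mul (C := C)) => //; last exact: aeT.
exact: locAC_meas.
Qed.

Lemma H1C_add (f g : R -> R[i]) : H1C f -> H1C g -> H1C (fun x => f x + g x).
Proof.
move=> /H1C_iff [f1 f2] /H1C_iff [g1 g2]; apply/H1C_iff; split.
- have -> : reF (fun x => f x + g x) = (fun x => reF f x + reF g x).
    by apply/funext => x; rewrite /reF ReD.
  exact: H1R_add.
- have -> : imF (fun x => f x + g x) = (fun x => imF f x + imF g x).
    by apply/funext => x; rewrite /imF ImD.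
  exact: H1R_add.
Qed.

Lemma H1C_mul (m f : R -> R[i]) : goodC m -> H1C f -> H1C (fun x => m x * f x).
Proof.
move=> [m1 m2] /H1C_iff [f1 f2]; apply/H1C_iff; split.
- have -> : reF (fun x => m x * f x) =
     (fun x => reF m x * reF f x + - (imF m x * imF f x)).
    by apply/funext => x; rewrite /reF /imF ReM.
  by apply: H1R_add; [exact: H1R_mul|apply: H1R_neg; exact: H1R_mul].
- have -> : imF (fun x => m x * f x) =
     (fun x => reF m x * imF f x + imF m x * reF f x).
    by apply/funext => x; rewrite /reF /imF ImM.
  by apply: H1R_add; exact: H1R_mul.
Qed.

Lemma L2C_add (f g : R -> R[i]) : L2C f -> L2C g -> L2C (fun x => f x + g x).
Proof.
move=> [f1 f2] [g1 g2]; split.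
- have -> : reF (fun x => f x + g x) = (fun x => reF f x + reF g x).
    by apply/funext => x; rewrite /reF ReD.
  exact: L2R_add.
- have -> : imF (fun x => f x + g x) = (fun x => imF f x + imF g x).
    by apply/funext => x; rewrite /imF ImD.
  exact: L2R_add.
Qed.

Lemma L2C_mul (m f : R -> R[i]) : goodC m -> L2C f -> L2C (fun x => m x * f x).
Proof.
move=> [m1 m2] [f1 f2]; split.
- have -> : reF (fun x => m x * f x) =
     (fun x => reF m x * reF f x + - (imF m x * imF f x)).
    by apply/funext => x; rewrite /reF /imF ReM.
  by apply: L2R_add; [exact: goodm_L2R|apply: L2R_neg; exact: goodm_L2R].
- have -> : imF (fun x => m x * f x) =
     (fun x => reF m x * imF f x + imF m x * reF f x).
    by apply/funext => x; rewrite /reF /imF ImM.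
  by apply: L2R_add; exact: goodm_L2R.
Qed.
End CX.

Definition Mform (R : realType) (phi : R -> R) (m : R -> R[i]) : Prop :=
  exists r a b : R, forall x, m x = rC r * expi (a * phi x + b).

Section MF.
Variable R : realType.
Local Notation mu := (leb R).

Lemma rC_opp (r : R) : rC (- r) = - rC r.
Proof. by apply/eqP; rewrite eq_complex /= oppr0 !eqxx. Qed.

Lemma Mform_good (phi : R -> R) m : goodphi phi -> Mform phi m -> goodC m.
Proof.
move=> gp [r [a [b hm]]]; split.
- have -> : reF m = (fun x => r * cos (a * phi x + b)).
    by apply/funext => x; rewrite /reF hm ReM /=; ring.
  exact: goodm_cos.
- have -> : imF m = (fun x => r * cos (a * phi x + (b - pi / 2))).
    apply/funext => x; rewrite /imF hm ImM /=.
    have -> : a * phi x + (b - pi / 2) = (a * phi x + b) - pi / 2 by ring.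
    rewrite cosBpihalf; ring.
  exact: goodm_cos.
Qed.

Lemma Mmat_form (phi : R -> R) (i j : 'I_2) : Mform phi (fun x => Mmat phi x i j).
Proof.
set k := (Num.sqrt (2 : R))^-1.
move: i j => [[|[|//]] hi] [[|[|//]] hj].
- exists k, (- 2^-1), (pi / 2 / 2) => x; rewrite /Mmat !mxE /=.
  by congr (_ * expi _); ring.
- exists k, (2^-1), (- (pi / 2 / 2)) => x; rewrite /Mmat !mxE /=.
  by congr (_ * expi _); ring.
- exists k, (- 2^-1), (pi / 2 / 2) => x; rewrite /Mmat !mxE /=.
  by congr (_ * expi _); ring.
- exists (- k), (2^-1), (- (pi / 2 / 2)) => x; rewrite /Mmat !mxE /= rC_opp mulrN mulNr.
  by congr (- (_ * expi _)); ring.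
Qed.

Lemma conj_form (r t : R) : conjc (rC r * expi t) = rC r * expi (- t).
Proof. by apply/eqP; rewrite eq_complex /= cosN sinN; apply/andP; split; apply/eqP; ring. Qed.

Lemma adj_form (phi : R -> R) (i j : 'I_2) : Mform phi (fun x => adjmx (Mmat phi x) i j).
Proof.
have [r [a [b h]]] := Mmat_form phi j i.
exists r, (- a), (- b) => x; rewrite /adjmx mxE (_ : (Mmat phi x)^T i j = Mmat phi x j i); last by rewrite [LHS]mxE. rewrite h conj_form.
by congr (_ * expi _); ring.
Qed.
End MF.

Section Comp.
Variable R : realType.
Local Notation mu := (leb R).
Lemma big2 (V : zmodType) (F : 'I_2 -> V) : \sum_(i < 2) F i = F ord0 + F ord_max.
Proof. rewrite big_ord_recl big_ord1; congr (_ + F _); exact: val_inj. Qed.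

Lemma comp_mul (A : R -> 'M[R[i]]_2) (F : R -> 'cV[R[i]]_2) (k : 'I_2) :
  Defs.comp (fun x => A x *m F x) k =
  (fun x => A x k ord0 * Defs.comp F ord0 x + A x k ord_max * Defs.comp F ord_max x).
Proof. by apply/funext => x; rewrite /Defs.comp mxE big2. Qed.

Lemma L2V_form (phi : R -> R) (A : R -> 'M[R[i]]_2) F : goodphi phi ->
  (forall i j, Mform phi (fun x => A x i j)) -> L2V F -> L2V (fun x => A x *m F x).
Proof.
move=> gp hA [h1 h2]; split; rewrite comp_mul;
  by apply: L2C_add; apply: L2C_mul => //; apply: Mform_good gp (hA _ _).
Qed.

Lemma H1V_form (phi : R -> R) (A : R -> 'M[R[i]]_2) F : goodphi phi ->
  (forall i j, Mform phi (fun x => A x i j)) -> H1V F -> H1V (fun x => A x *m F x).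
Proof.
move=> gp hA [h1 h2]; split; rewrite comp_mul;
  by apply: H1C_add; apply: H1C_mul => //; apply: Mform_good gp (hA _ _).
Qed.

Lemma expiN (t : R) : expi t * expi (- t) = 1.
Proof.
apply/eqP; rewrite eq_complex /= cosN sinN.
have := cos2Dsin2 t; rewrite !expr2 => h.
by apply/andP; split; apply/eqP; [rewrite -h|]; ring.
Qed.

Lemma KK : rC (Num.sqrt (2 : R))^-1 * rC (Num.sqrt (2 : R))^-1 * 2 = 1.
Proof.
have h2 : Num.sqrt (2 : R) ^+ 2 = 2 by rewrite sqr_sqrtr.
have hn : Num.sqrt (2 : R) != 0 by rewrite sqrtr_eq0 -ltNge.
apply/eqP; rewrite eq_complex /=; apply/andP; split; apply/eqP; last by ring.
have -> : (1 + 1 : R) = Num.sqrt 2 ^+ 2 by rewrite h2.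
by field.
Qed.

End Comp.
Section U.
Variable R : realType.
Lemma conjM (x y : R[i]) : conjc (x * y) = conjc x * conjc y.
Proof. by case: x => a b; case: y => c d; apply/eqP; rewrite eq_complex /=; apply/andP; split; apply/eqP; ring. Qed.
Lemma conjN (x : R[i]) : conjc (- x) = - conjc x.
Proof. by case: x => a b. Qed.
Lemma unit_gen (K E E' : R[i]) (M : 'M[R[i]]_2) :
  (forall i j : 'I_2, M i j = K * (if val j == 0%N then E' else if val i == 0%N then E else - E)) ->
  E * E' = 1 -> K * K * 2 = 1 -> conjc K = K -> conjc E = E' -> conjc E' = E ->
  adjmx M *m M = 1 /\ M *m adjmx M = 1.
Proof.
move=> hM E1 E2 cK cE cE'.
split; apply/matrixP => i j; rewrite !mxE !big2 /adjmx !mxE.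
all: rewrite !(mxE, hM).
all: move: i j => [[|[|//]] hi] [[|[|//]] hj]; rewrite /= ?conjM ?conjN ?cE ?cE' ?cK; ring: E1 E2.
Qed.
End U.
Section U2.
Variable R : realType.
Lemma Mmat_entry (phi : R -> R) x (i j : 'I_2) : Mmat phi x i j =
  rC (Num.sqrt (2 : R))^-1 * (if val j == 0%N then expi (- ((phi x - pi / 2) / 2))
    else if val i == 0%N then expi ((phi x - pi / 2) / 2) else - expi ((phi x - pi / 2) / 2)).
Proof. by rewrite /Mmat !mxE. Qed.

Lemma unitary (phi : R -> R) x :
  adjmx (Mmat phi x) *m Mmat phi x = 1 /\ Mmat phi x *m adjmx (Mmat phi x) = 1.
Proof.
apply: (unit_gen (Mmat_entry phi x)).
- exact: expiN.
- exact: KK.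
- by apply/eqP; rewrite eq_complex /= oppr0 !eqxx.
- by apply/eqP; rewrite eq_complex /= cosN sinN !eqxx.
- by apply/eqP; rewrite eq_complex /= cosN sinN opprK !eqxx.
Qed.
End U2.
Section Bij.
Variable R : realType.
Local Notation mu := (leb R).

Lemma Mapp_inj (phi : R -> R) F G x : Mapp phi F x = Mapp phi G x -> F x = G x.
Proof.
rewrite /Mapp => h.
have [u _] := unitary phi x.
have := congr1 (mulmx (adjmx (Mmat phi x))) h.
by rewrite !mulmxA u !mul1mx.
Qed.

Lemma Mapp_star (phi : R -> R) G x : Mapp phi (Mstar_app phi G) x = G x.
Proof.
rewrite /Mapp /Mstar_app.
have [_ u] := unitary phi x.
by rewrite mulmxA u mul1mx.
Qed.

Lemma bij_part (phi : R -> R) : goodphi phi ->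
  ((forall F, L2V F -> L2V (Mapp phi F)) /\
   (forall F G, L2V F -> L2V G -> aeeqV (Mapp phi F) (Mapp phi G) -> aeeqV F G) /\
   (forall G, L2V G -> exists2 F, L2V F & aeeqV (Mapp phi F) G)) /\
  ((forall F, H1V F -> H1V (Mapp phi F)) /\
   (forall F G, H1V F -> H1V G -> aeeqV (Mapp phi F) (Mapp phi G) -> aeeqV F G) /\
   (forall G, H1V G -> exists2 F, H1V F & aeeqV (Mapp phi F) G)).
Proof.
move=> gp.
have inj F G : aeeqV (Mapp phi F) (Mapp phi G) -> aeeqV F G.
  by apply: aeS => x; exact: Mapp_inj.
have sur G : aeeqV (Mapp phi (Mstar_app phi G)) G.
  by apply: aeT => x; exact: Mapp_star.
split; split.
- by move=> F hF; apply: (L2V_form gp (Mmat_form phi)).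
- split; first by move=> F G _ _; exact: inj.
  move=> G hG; exists (Mstar_app phi G) => //.
  exact: (L2V_form gp (adj_form phi)).
- by move=> F hF; apply: (H1V_form gp (Mmat_form phi)).
- split; first by move=> F G _ _; exact: inj.
  move=> G hG; exists (Mstar_app phi G) => //.
  exact: (H1V_form gp (adj_form phi)).
Qed.
End Bij.
Definition cisd (R : realType) (f : R -> R[i]) (x : R) (df : R[i]) : Prop :=
  is_derive x 1 (reF f) (complex.Re df) /\ is_derive x 1 (imF f) (complex.Im df).

Section CD.
Variable R : realType.

Lemma cisd_of (f : R -> R[i]) x : cderivable f x -> cisd f x (cderiv f x).
Proof. by move=> [d1 d2]; split; exact: der_is. Qed.

Lemma cisd_val (f : R -> R[i]) x df : cisd f x df -> cderiv f x = df.
Proof.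
move=> [h1 h2]; have [_ e1] := is_der1 h1; have [_ e2] := is_der1 h2.
by rewrite /cderiv e1 e2; case: df {h1 h2 e1 e2}.
Qed.

Lemma cisd_add (f g : R -> R[i]) x df dg : cisd f x df -> cisd g x dg ->
  cisd (fun y => f y + g y) x (df + dg).
Proof.
move=> [f1 f2] [g1 g2]; split.
- have -> : reF (fun y => f y + g y) = (fun y => reF f y + reF g y).
    by apply/funext => y; rewrite /reF ReD.
  by rewrite ReD; exact: isd_add.
- have -> : imF (fun y => f y + g y) = (fun y => imF f y + imF g y).
    by apply/funext => y; rewrite /imF ImD.
  by rewrite ImD; exact: isd_add.
Qed.

Lemma isd_sub (f g : R -> R) (df dg x : R) : is_derive x 1 f df -> is_derive x 1 g dg ->
  is_derive x 1 (fun y => f y - g y) (df - dg).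
Proof. move=> h1 h2. apply: is_deriveB. Qed.

Lemma cisd_mul (f g : R -> R[i]) x df dg : cisd f x df -> cisd g x dg ->
  cisd (fun y => f y * g y) x (df * g x + f x * dg).
Proof.
move=> [f1 f2] [g1 g2]; split.
- have -> : reF (fun y => f y * g y) =
     (fun y => reF f y * reF g y - imF f y * imF g y).
    by apply/funext => y; rewrite /reF /imF ReM.
  apply: isd_eq (isd_sub (isd_mul f1 g1) (isd_mul f2 g2)) _.
  by rewrite /reF /imF ReD !ReM ?ImM; ring.
- have -> : imF (fun y => f y * g y) =
     (fun y => reF f y * imF g y + imF f y * reF g y).
    by apply/funext => y; rewrite /reF /imF ImM.
  apply: isd_eq (isd_add (isd_mul f1 g2) (isd_mul f2 g1)) _.
  by rewrite /reF /imF ImD ?ReM !ImM; ring.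
Qed.

Lemma cisd_const (c : R[i]) x : cisd (fun _ => c) x 0.
Proof. by split; exact: isd_cst. Qed.

Lemma isd_sin (f : R -> R) (df x : R) : is_derive x 1 f df -> 
  is_derive x 1 (fun y => sin (f y)) (cos (f x) * df).
Proof. move=> h1. apply: (is_derive1_comp (f := sin)). Qed.

Lemma cisd_expi (psi : R -> R) (x dpsi : R) : is_derive x 1 psi dpsi ->
  cisd (fun y => expi (psi y)) x (expi (psi x) * (iC R * rC dpsi)).
Proof.
move=> h; split.
- apply: isd_eq; first exact: isd_cos.
  by rewrite /expi /iC /rC /=; ring.
- apply: isd_eq; first exact: isd_sin.
  by rewrite /expi /iC /rC /=; ring.
Qed.
End CD.
Section Fin.
Variable R : realType.

Lemma rC_add (a b : R) : rC (a + b) = rC a + rC b.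
Proof. by apply/eqP; rewrite eq_complex /= addr0 !eqxx. Qed.
Lemma rC_sub (a b : R) : rC (a - b) = rC a - rC b.
Proof. by apply/eqP; rewrite eq_complex /= oppr0 addr0 !eqxx. Qed.
Lemma expiD (a b : R) : expi a * expi b = expi (a + b).
Proof. by apply/eqP; rewrite eq_complex /= cosD sinD; apply/andP; split; apply/eqP; ring. Qed.
Lemma II : iC R * iC R = -1.
Proof. by apply/eqP; rewrite eq_complex /=; apply/andP; split; apply/eqP; ring. Qed.

Lemma P_E (t : R) : expi t = iC R * expi ((t - pi / 2) / 2) * expi ((t - pi / 2) / 2).
Proof.
rewrite -mulrA expiD (_ : (t - pi / 2) / 2 + (t - pi / 2) / 2 = t - pi / 2); last by field.
apply/eqP; rewrite eq_complex /= cosBpihalf sinBpihalf; apply/andP; split; apply/eqP; ring.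
Qed.

Lemma Pc_E (t : R) : conjc (expi t) =
  - iC R * expi (- ((t - pi / 2) / 2)) * expi (- ((t - pi / 2) / 2)).
Proof.
rewrite -mulrA expiD (_ : - ((t - pi / 2) / 2) + - ((t - pi / 2) / 2) = - (t - pi / 2)); last by field.
apply/eqP; rewrite eq_complex /= cosN sinN cosBpihalf sinBpihalf; apply/andP; split; apply/eqP; ring.
Qed.

Lemma isd_opp (f : R -> R) (df x : R) : is_derive x 1 f df ->
  is_derive x 1 (fun y => - f y) (- df).
Proof.
move=> h; have := @isd_scale R f (-1) df x h.
have -> : (fun y => -1 * f y) = (fun y => - f y) by apply/funext => y; rewrite mulN1r.
by rewrite mulN1r.
Qed.

Lemma final_pt (q : R -> R[i]) (phi : R -> R) (F : R -> 'cV[R[i]]_2) x :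
  q x = rC (cmod (q x)) * expi (phi x) ->
  derivable phi x 1 -> cderivable (Defs.comp F ord0) x -> cderivable (Defs.comp F ord_max) x ->
  Lop q F x = Mstar_app phi (calLop q phi (Mapp phi F)) x.
Proof.
move=> hq dphi d1 d2.
have hpsi : is_derive x 1 (fun y => (phi y - pi / 2) / 2) (derive1 phi x / 2).
  apply: isd_eq; first exact: (isd_mul (isd_sub (der_is dphi) (isd_cst (pi / 2) x)) (isd_cst 2^-1 x)).
  by rewrite mulr0 add0r subr0 mulrC.
have hpsiN : is_derive x 1 (fun y => - ((phi y - pi / 2) / 2)) (- (derive1 phi x / 2)).
  exact: isd_opp.
have cE := cisd_expi hpsi.
have cE' := cisd_expi hpsiN.
set k := (Num.sqrt (2 : R))^-1.
have G0 : Defs.comp (Mapp phi F) ord0 = fun y =>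
   rC k * expi (- ((phi y - pi / 2) / 2)) * Defs.comp F ord0 y +
   rC k * expi ((phi y - pi / 2) / 2) * Defs.comp F ord_max y.
  by rewrite /Mapp comp_mul; apply/funext => y; rewrite !Mmat_entry.
have G1 : Defs.comp (Mapp phi F) ord_max = fun y =>
   rC k * expi (- ((phi y - pi / 2) / 2)) * Defs.comp F ord0 y +
   rC k * (-1 * expi ((phi y - pi / 2) / 2)) * Defs.comp F ord_max y.
  by rewrite /Mapp comp_mul; apply/funext => y; rewrite !Mmat_entry /= mulN1r.
have c1 := cisd_of d1; have c2 := cisd_of d2.
have cK := cisd_const (rC k) x.
have cmE := cisd_mul (cisd_const (- 1) x) cE.
have D0 := cisd_val (cisd_add (cisd_mul (cisd_mul cK cE') c1) (cisd_mul (cisd_mul cK cE) c2)).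
have D1 := cisd_val (cisd_add (cisd_mul (cisd_mul cK cE') c1) (cisd_mul (cisd_mul cK cmE) c2)).
rewrite /Lop /calLop /Mstar_app G0 G1 /=.
rewrite D0 D1.
set Q := cmod (q x) in hq *.
have cR (r : R) : conjc (rC r) = rC r by apply/eqP; rewrite eq_complex /= oppr0 !eqxx.
have cE1 : conjc (expi ((phi x - pi / 2) / 2)) = expi (- ((phi x - pi / 2) / 2)).
  by apply/eqP; rewrite eq_complex /= cosN sinN !eqxx.
have cE2 : conjc (expi (- ((phi x - pi / 2) / 2))) = expi ((phi x - pi / 2) / 2).
  by apply/eqP; rewrite eq_complex /= cosN sinN opprK !eqxx.
have E1 := expiN ((phi x - pi / 2) / 2).
have E2 : rC k * rC k * 2 = 1 by exact: KK.
have E3 := II.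
apply/matrixP => i j; rewrite !mxE big2 !mxE.
rewrite -/k /u_minus /u_plus -/Q rC_sub rC_add rC_opp.
rewrite hq conjM Pc_E P_E.
rewrite !conjM !cR !(fun_if conjc) !conjN cE1 cE2.
move: i j => [[|[|//]] hi] [[|//] hj] /=.
- clearbody k; ring: E1 E2 E3.
- clearbody k.
  have hm : forall z : R[i], z = rC k * rC k * 2 * z by move=> z; rewrite E2 mul1r.
  apply: etrans (hm _) _; ring: E1 E3.
Qed.

End Fin.

Unset Implicit Arguments.

Theorem lemma2p1 (R : realType) (q : R -> R[i]) (phi : R -> R) :
  (* q = |q| e^{i phi}, |q| never vanishes, |q| in L^infty *)
  (forall x, q x = rC (cmod (q x)) * expi (phi x)) ->
  (forall x, cmod (q x) != 0) ->
  Linf_ae (fun x => cmod (q x)) ->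
  (* phi locally absolutely continuous with phi' in L^infty *)
  locAC phi ->
  (\forall x \ae (leb R), derivable phi x 1) ->
  Linf_ae (derive1 phi) ->
  (* u_pm in L^infty *)
  Linf_ae (u_plus q phi) ->
  Linf_ae (u_minus q phi) ->
  (* M : L^2 -> L^2 bijective (on a.e.-classes) *)
  ((forall F, L2V F -> L2V (Mapp phi F)) /\
   (forall F G, L2V F -> L2V G -> aeeqV (Mapp phi F) (Mapp phi G) -> aeeqV F G) /\
   (forall G, L2V G -> exists2 F, L2V F & aeeqV (Mapp phi F) G)) /\
  (* M : H^1 -> H^1 bijective (on a.e.-classes) *)
  ((forall F, H1V F -> H1V (Mapp phi F)) /\
   (forall F G, H1V F -> H1V G -> aeeqV (Mapp phi F) (Mapp phi G) -> aeeqV F G) /\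
   (forall G, H1V G -> exists2 F, H1V F & aeeqV (Mapp phi F) G)) /\
  (* L = M^* calL M on H^1 *)
  (forall F, H1V F ->
     aeeqV (Lop q F) (Mstar_app phi (calLop q phi (Mapp phi F)))).
Proof.
move=> hq _ _ hAC hd [h [hL he]] _ _.
have gp : goodphi phi.
  split => //; exists h; split => //.
  by apply: aeS (aeI hd he) => x [d e].
have [B1 B2] := bij_part gp.
split => //; split => //.
move=> F [[_ [_ [g1 [_ e1]]]] [_ [_ [g2 [_ e2]]]]].
apply: aeS (aeI hd (aeI e1 e2)) => x [dx [[c1 _] [c2 _]]].
exact: final_pt.
Qed.
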